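(* The restrictions $\rho(x_1),\dots,\rho(x_N)$ are algebraically independent generators of the coordinate algebra $F[S]$ of the affine subspace $S=f+V\subseteq\mathfrak{g}_e^*$.
   Context: $F$ is an algebraically closed field of characteristic zero; $\lambda=(\lambda_1,\dots,\lambda_n)$ is a composition of $N$ with positive parts and $\lambda_1\le\cdots\le\lambda_n$; $s_{i,j}:=\lambda_j-\min(\lambda_i,\lambda_j)$. $e\in\mathfrak{gl}_N(F)$ is the nilpotent matrix with Jordan blocks $\lambda_1,\dots,\lambda_n$ down the diagonal and $\mathfrak{g}_e$ its centralizer. With the diagram whose row $i$ has $\lambda_i$ boxes, filled with $1,\dots,N$ along rows, and $\mathrm{row}(h),\mathrm{col}(h)$ the row/column of $h$, set $e_{i,j;r}:=\sum_{\mathrm{row}(h)=i,\mathrm{row}(k)=j,\mathrm{col}(k)-\mathrm{col}(h)=r}e_{h,k}$ for $s_{i,j}\le r<\lambda_j$; these form a basis of $\mathfrak{g}_e$. Let $\{f_{i,j;r}\}$ be the dual basis of $\mathfrak{g}_e^*$. Identify $S(\mathfrak{g}_e)$ with the coordinate algebra $F[\mathfrak{g}_e^*]$. Let $f:=f_{1,2;\lambda_2-1}+f_{2,3;\lambda_3-1}+\cdots+f_{n-1,n;\lambda_n-1}$, let $V$ be the span of $\{f_{n,i;r}:1\le i\le n,\ 0\le r<\lambda_i\}$, $S:=f+V$, and $\rho:F[\mathfrak{g}_e^*]\to F[S]$ restriction of functions. $(d_1,\dots,d_N)$ consists of $\lambda_n$ copies of $1$, then $\lambda_{n-1}$ copies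 of $2$, ..., then $\lambda_1$ copies of $n$. For $\mu\subseteq\lambda$ ($0\le\mu_i\le\lambda_i$), $|\mu|=\sum\mu_i$, $\ell(\mu)$ = number of nonzero parts. For $r=1,\dots,N$ with $d=d_r$, $x_r:=\sum_{\mu\subseteq\lambda,\ |\mu|=r,\ \ell(\mu)=d}\sum_{w\in S_d}\mathrm{sgn}(w)\,e_{i_{w1},i_1;\mu_{i_1}-1}\cdots e_{i_{wd},i_d;\mu_{i_d}-1}\in S(\mathfrak{g}_e)$, where $i_1<\cdots<i_d$ are the positions of the nonzero entries of $\mu$. *)

(* Defs.v *)
From HB Require Import structures.
From mathcomp Require Import all_boot all_order all_algebra all_fingroup.
From mathcomp Require Import mpoly.
Set Implicit Arguments. Unset Strict Implicit. Unset Printing Implicit Defensive.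
Import GRing.Theory.
Local Open Scope ring_scope.

(* Conventions: the composition lambda = (lambda_1,...,lambda_n) is the
   sequence [lam]; indices are 0-based, so paper index i corresponds to i-1. *)
Section Centralizer.
Variable (F : fieldType) (lam : seq nat).

Definition nparts : nat := size lam.
Definition lm (i : nat) : nat := nth 0%N lam i.
Definition Ntot : nat := sumn lam.
Definition sij (i j : nat) : nat := (lm j - minn (lm i) (lm j))%N.

(* index set of the basis e_{i,j;r} (s_{i,j} <= r < lambda_j) of g_e,
   equivalently of the dual basis f_{i,j;r} of g_e^* *)
Definition gvalid (t : 'I_nparts * 'I_nparts * 'I_Ntot) : bool :=
  (sij t.1.1 t.1.2 <= t.2)%N && (t.2 < lm t.1.2)%N.
Definition gidx := {t : 'I_nparts * 'I_nparts * 'I_Ntot | gvalid t}.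

(* S(g_e) = F[g_e^*] : polynomial ring in the basis e_{i,j;r} *)
Definition Sge := {mpoly F[#|{: gidx}|]}.

(* e_{i,j;r} in S(g_e) (nat indices, 0-based); it is interpreted as 0
   when (i,j,r) is not a basis index, i.e. r < s_{i,j} or r >= lambda_j. *)
Definition evar (i j r : nat) : Sge :=
  \sum_(t : gidx | [&& ((sval t).1.1 : nat) == i, ((sval t).1.2 : nat) == j
                     & ((sval t).2 : nat) == r]) 'X_(enum_rank t).

Definition dseq : seq nat :=
  flatten [seq nseq (lm (nparts - k.+1)) k.+1 | k <- iota 0 nparts].
Definition dd (r : nat) : nat := nth 0%N dseq r.-1.

Definition mu_ok (r d : nat) (mu : {ffun 'I_nparts -> 'I_Ntot.+1}) : bool :=
  [&& [forall i, (mu i <= lm i)%N], (\sum_i (mu i : nat))%N == r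
    & #|[pred i | (mu i : nat) != 0%N]| == d].

Definition xr (r : nat) : Sge :=
  let d := dd r in
  \sum_(mu : {ffun 'I_nparts -> 'I_Ntot.+1} | mu_ok r d mu)
    let P := [seq (val i) | i <- enum 'I_nparts & (mu i : nat) != 0%N] in
    let M := [seq (mu i : nat) | i <- enum 'I_nparts & (mu i : nat) != 0%N] in
    \sum_(w : 'S_d) (-1) ^+ (odd_perm w) *
      \prod_(k < d) evar (nth 0%N P (w k)) (nth 0%N P k) (nth 0%N M k).-1.

(* coordinates on the affine subspace S = f + V:
   V has basis f_{n,i;r} (basis indices whose first index is n) *)
Definition sidx := {t : gidx | ((sval t).1.1 : nat) == nparts.-1}.
Definition FS := {mpoly F[#|{: sidx}|]}.

(* coefficient of f_t in f = sum_k f_{k,k+1; lambda_{k+1}-1} *)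
Definition fcoef (t : gidx) : F :=
  ((((sval t).1.1 : nat).+1 == (sval t).1.2) &&
   (((sval t).2 : nat) == (lm (sval t).1.2).-1))%:R.

(* restriction to S of the linear coordinate function e_t : the
   f_t-coordinate of the point f + sum_s Y_s f_s of S *)
Definition rho_coord (t : gidx) : FS :=
  (fcoef t)%:MP + \sum_(s : sidx | sval s == t) 'X_(enum_rank s).

Definition rho (p : Sge) : FS :=
  p \mPo [tuple rho_coord (enum_val i) | i < #|{: gidx}|].

Definition rho_x : Ntot.-tuple FS := [tuple rho (xr i.+1) | i < Ntot].

End Centralizer.

(* Main.v *)
Require Import Defs.
From HB Require Import structures.
From mathcomp Require Import all_boot all_order all_algebra all_fingroup.
From mathcomp Require Import mpoly.
From mathcomp Require Import zify.
Set Implicit Arguments. Unset Strict Implicit. Unset Printing Implicit Defensive.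
Import GRing.Theory.
Local Open Scope ring_scope.
Lemma comp_mpolyA (R : comRingType) n k l (p : {mpoly R[n]})
  (t : n.-tuple {mpoly R[k]}) (u : k.-tuple {mpoly R[l]}) :
  (p \mPo t) \mPo u = p \mPo [tuple (tnth t i) \mPo u | i < n].
Proof.
rewrite [p \mPo t]comp_mpolyE [p \mPo _]comp_mpolyE raddf_sum /=; apply: eq_bigr => m _.
rewrite linearZ /= rmorph_prod /=; congr (_ *: _); apply: eq_bigr => i _.
by rewrite rmorphXn tnth_mktuple.
Qed.
Lemma triv_auto (R : comRingType) N M (rx : N.-tuple {mpoly R[M]})
  (phi : 'I_N -> 'I_M) (g : 'I_M -> 'I_N) (e : 'I_N -> nat) :
  cancel phi g -> cancel g phi ->
  (forall i, tnth rx i = (-1) ^+ e i * 'X_(phi i)) ->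
  (forall p : {mpoly R[N]}, p \mPo rx = 0 -> p = 0) /\
  (forall q : {mpoly R[M]}, exists p : {mpoly R[N]}, q = p \mPo rx).
Proof.
move=> phiK gK hrx.
pose u := [tuple (-1) ^+ e (g j) * 'X_(g j) | j < M] : M.-tuple {mpoly R[N]}.
have sq i : ((-1) ^+ e i * (-1) ^+ e i : {mpoly R[_]}) = 1.
  by rewrite -exprD -signr_odd addnn odd_double.
split.
  move=> p hp; have := congr1 (comp_mpoly u) hp.
  rewrite comp_mpolyA comp_mpoly0 => <-.
  rewrite -[LHS](comp_mpoly_id p); congr comp_mpoly; apply: eq_from_tnth => i.
  rewrite !tnth_mktuple hrx rmorphM /= comp_mpolyXU -tnth_nth tnth_mktuple phiK.
  by rewrite rmorphXn rmorphN1 mulrA sq mul1r.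
move=> q; exists (q \mPo u); rewrite comp_mpolyA.
rewrite -[LHS](comp_mpoly_id q); congr comp_mpoly; apply: eq_from_tnth => j.
rewrite !tnth_mktuple rmorphM /= comp_mpolyXU -tnth_nth hrx gK.
by rewrite rmorphXn rmorphN1 mulrA sq mul1r.
Qed.

Lemma card_filter_ord n (C : pred 'I_n) : #|[pred i | C i]| = size (filter C (enum 'I_n)).
Proof. by rewrite cardE !size_filter enumT; apply: eq_count. Qed.
Section Main.
Variable (F : fieldType) (lam : seq nat).
Hypothesis hn0 : (0 < size lam)%N.
Hypothesis hpos : all (fun k => 0 < k)%N lam.
Hypothesis hsort : sorted leq lam.

Local Notation n := (nparts lam).
Local Notation lm := (lm lam).
Local Notation N := (Ntot lam).

Lemma lm_pos i : (i < n)%N -> (0 < lm i)%N.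
Proof. by move=> hi; apply: (all_nthP 0 hpos). Qed.

Lemma lm_le_last i : (i < n)%N -> (lm i <= lm n.-1)%N.
Proof.
move=> hi; apply: (sorted_leq_nth leq_trans leqnn 0 hsort); rewrite ?inE /nparts in hi *; lia.
Qed.

Lemma lm_leN i : (lm i <= N)%N.
Proof.
rewrite /Defs.lm /Ntot; elim: lam i => [|x s IH] [|i] /=; rewrite ?nth_nil //; first lia.
by have := IH i; lia.
Qed.

Definition T b := (\sum_(b <= i < n) lm i)%N.

Lemma T0 : T 0 = N.
Proof. by rewrite /T /Ntot sumnE [in RHS](big_nth 0). Qed.

Lemma T_split b : (b < n)%N -> T b = (lm b + T b.+1)%N.
Proof. by move=> hb; rewrite /T big_ltn. Qed.

Lemma T_mono b b' : (b <= b')%N -> (T b' <= T b)%N.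
Proof.
move=> hbb; case: (leqP b' n) => hb'.
  by rewrite /T [X in (_ <= X)%N](@big_cat_nat _ _ _ b') //= leq_addl.
by rewrite /T big_geq //; lia.
Qed.

Lemma T_n : T n = 0%N.
Proof. by rewrite /T big_geq. Qed.

Lemma psi_lt b c : (b < n)%N -> (c < lm b)%N -> (c + T b.+1 < T b)%N.
Proof. by move=> hb hc; rewrite (T_split hb) ltn_add2r. Qed.

Lemma psi_ltN b c : (b < n)%N -> (c < lm b)%N -> (c + T b.+1 < N)%N.
Proof. by move=> hb hc; rewrite -T0; exact: leq_trans (psi_lt hb hc) (T_mono (leq0n b)). Qed.

Lemma psi_inj b c b' c' : (b < n)%N -> (c < lm b)%N -> (b' < n)%N -> (c' < lm b')%N ->
  (c + T b.+1 = c' + T b'.+1)%N -> b = b' /\ c = c'.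
Proof.
move=> hb hc hb' hc' e.
have key : forall b c b' c', (b < n)%N -> (c < lm b)%N -> (b' < n)%N -> (c' < lm b')%N ->
   (b < b')%N -> (c' + T b'.+1 < c + T b.+1)%N.
  move=> x y x' y' hx hy hx' hy' hxx.
  apply: (leq_trans (psi_lt hx' hy')); apply: leq_trans (T_mono hxx) _; exact: leq_addl.
case: (ltngtP b b') => hbb.
- by have := key _ _ _ _ hb hc hb' hc' hbb; lia.
- by have := key _ _ _ _ hb' hc' hb hc hbb; lia.
- by subst; split => //; lia.
Qed.

Lemma psi_surj i : (i < N)%N -> exists b c, [/\ (b < n)%N, (c < lm b)%N & i = (c + T b.+1)%N].
Proof.
rewrite -T0 => hi.
suff : forall k b0, (b0 + k = n)%N -> (i < T b0)%N ->
   exists b c, [/\ (b < n)%N, (c < lm b)%N & i = (c + T b.+1)%N].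
  by move=> /(_ n 0%N); apply.
elim=> [|k IH] b0 hk hib0.
  rewrite addn0 in hk; subst b0; by rewrite T_n in hib0.
have hb0 : (b0 < n)%N by lia.
case: (leqP (T b0.+1) i) => h.
  exists b0, (i - T b0.+1)%N; split => //; last lia.
  by move: hib0; rewrite (T_split hb0); lia.
by apply: (IH b0.+1) => //; lia.
Qed.

Lemma nth_flatten_blk (ss : seq (seq nat)) k c : (k < size ss)%N ->
  (c < size (nth [::] ss k))%N ->
  nth 0%N (flatten ss) (sumn (take k (shape ss)) + c) = nth 0%N (nth [::] ss k) c.
Proof.
elim: ss k => [|s ss IH] [|k] //= hk hc.
  by rewrite nth_cat hc.
rewrite nth_cat ifN; last lia.
by rewrite -IH //; congr nth; lia.
Qed.

Lemma dd_psi b c : (b < n)%N -> (c < lm b)%N -> dd lam (c + T b.+1).+1 = (n - b)%N.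
Proof.
move=> hb hc; rewrite /dd /dseq /=.
set ss := map _ _.
have hk : (n.-1 - b < size ss)%N by rewrite size_map size_iota; lia.
have hnth : nth [::] ss (n.-1 - b) = nseq (lm b) (n - b)%N.
  rewrite (nth_map 0%N) ?size_iota; last lia.
  rewrite nth_iota; last lia.
  by congr nseq; [congr Defs.lm; lia | lia].
have hsum : sumn (take (n.-1 - b) (shape ss)) = T b.+1.
  rewrite /shape -map_comp -map_take take_iota sumnE big_map.
  rewrite /T -{1}(add0n b.+1) big_addn big_nat_rev /= /index_iota !subn0.
  have -> : minn (n.-1 - b) n = (n - b.+1)%N by lia.
  apply: eq_big_seq => j; rewrite mem_iota => hj; rewrite size_nseq; congr Defs.lm; lia.
rewrite addnC -hsum nth_flatten_blk // hnth ?size_nseq //.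
by rewrite nth_nseq hc.
Qed.


Lemma n_gt0 : (0 < n)%N. Proof. exact: hn0. Qed.

Local Notation G a b c := (rho (evar F lam a b c)).

Lemma rho_sum (I : Type) (r : seq I) (P : pred I) (f : I -> Sge F lam) :
  rho (\sum_(i <- r | P i) f i) = \sum_(i <- r | P i) rho (f i).
Proof. by rewrite /rho rmorph_sum. Qed.

Lemma rho_prod (I : Type) (r : seq I) (P : pred I) (f : I -> Sge F lam) :
  rho (\prod_(i <- r | P i) f i) = \prod_(i <- r | P i) rho (f i).
Proof. by rewrite /rho rmorph_prod. Qed.

Lemma rhoM (p q : Sge F lam) : rho (p * q) = rho p * rho q.
Proof. by rewrite /rho rmorphM. Qed.

Lemma rho_sign k : rho ((-1) ^+ k : Sge F lam) = (-1) ^+ k.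
Proof. by rewrite /rho rmorphXn rmorphN1. Qed.

Lemma rhoX (i : 'I_#|{: gidx lam}|) : rho ('X_i : Sge F lam) = rho_coord F (enum_val i).
Proof. by rewrite /rho comp_mpolyXU -tnth_nth tnth_mktuple. Qed.

Lemma rho_evar a b c : G a b c = \sum_(t : gidx lam | [&& ((sval t).1.1 : nat) == a,
   ((sval t).1.2 : nat) == b & ((sval t).2 : nat) == c]) rho_coord F t.
Proof. by rewrite /evar rho_sum; apply: eq_bigr => t _; rewrite rhoX enum_rankK. Qed.

Lemma gidx_eq (t t' : gidx lam) : ((sval t).1.1 : nat) = (sval t').1.1 ->
  ((sval t).1.2 : nat) = (sval t').1.2 -> ((sval t).2 : nat) = (sval t').2 -> t = t'.
Proof.
case: t t' => [[[x y] z] h] [[[x' y'] z'] h'] /= e1 e2 e3; apply: val_inj => /=.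
by rewrite (val_inj e1) (val_inj e2) (val_inj e3).
Qed.

Lemma G_nz a b c : G a b c != 0 -> (a == n.-1) || ((a.+1 == b) && (c == (lm b).-1)).
Proof.
rewrite rho_evar; apply: contraTT => hneg; apply/negPn/eqP; apply: big1 => t /and3P [/eqP ha /eqP hb /eqP hc].
rewrite /rho_coord /fcoef ha hb hc.
move: hneg; rewrite negb_or => /andP [hna /negbTE ->]; rewrite mpolyC0 add0r.
apply: big1 => s /eqP hs; exfalso; have := proj2_sig s; rewrite hs ha; by move/negP: hna.
Qed.

Lemma G_last b c : (b < n)%N -> (c < lm b)%N -> exists s : sidx lam,
  [/\ ((sval (sval s)).1.2 : nat) = b, ((sval (sval s)).2 : nat) = c &
      G n.-1 b c = 'X_(enum_rank s)].
Proof.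
move=> hb hc.
have ha : (n.-1 < n)%N by have := n_gt0; lia.
have hcN : (c < N)%N by apply: leq_trans hc (lm_leN b).
pose tr := ((Ordinal ha, Ordinal hb), Ordinal hcN).
have hv : gvalid tr.
  rewrite /gvalid /= hc andbT /sij; have := lm_le_last hb; lia.
pose t : gidx lam := exist _ tr hv.
have hs : ((sval t).1.1 : nat) == n.-1 by [].
exists (exist _ t hs); split => //.
rewrite rho_evar (big_pred1 t); last first.
  move=> t'; apply/and3P/eqP => [[/eqP e1 /eqP e2 /eqP e3]|->]; last by [].
  by apply: gidx_eq.
rewrite /rho_coord /fcoef /=.
have -> : (n.-1.+1 == b) = false by apply/negbTE; have := n_gt0; lia.
by rewrite mpolyC0 add0r (big_pred1 (exist _ t hs)).
Qed.

Lemma G_sup a b : a.+1 = b -> (b < n)%N -> G a b (lm b).-1 = 1.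
Proof.
move=> hab hb.
have ha : (a < n)%N by lia.
have hlb := lm_pos hb.
have hcN : ((lm b).-1 < N)%N by have := lm_leN b; lia.
pose tr := ((Ordinal ha, Ordinal hb), Ordinal hcN).
have hv : gvalid tr.
  rewrite /gvalid /= /sij; have := lm_pos ha; lia.
pose t : gidx lam := exist _ tr hv.
rewrite rho_evar (big_pred1 t); last first.
  move=> t'; apply/and3P/eqP => [[/eqP e1 /eqP e2 /eqP e3]|->]; last by [].
  by apply: gidx_eq.
rewrite /rho_coord /fcoef /= hab !eqxx /= big1 ?addr0 //.
move=> s /eqP hs; exfalso; have := proj2_sig s; rewrite hs /=; lia.
Qed.


Lemma struct_lem (d : nat) (P Ms : seq nat) (w : 'S_d) :
  (0 < d)%N -> size P = d -> sorted ltn P -> all (fun x => x < n)%N P ->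
  (forall k : 'I_d, (nth 0%N P (w k) == n.-1) ||
      (((nth 0%N P (w k)).+1 == nth 0%N P k) && ((nth 0%N Ms k).-1 == (lm (nth 0%N P k)).-1))) ->
  [/\ forall k, (k < d)%N -> nth 0%N P k = (n - d + k)%N,
      forall k : 'I_d, (0 < k)%N -> (nth 0%N Ms k).-1 = (lm (nth 0%N P k)).-1 &
      w = perm (@ord_pred_inj d)].
Proof.
move=> hd hsz hsrt hall H.
pose p k := nth 0%N P k.
have lt_mono i j : (i < d)%N -> (j < d)%N -> (i < j)%N -> (p i < p j)%N.
  move=> hi hj hij; apply: (sorted_ltn_nth ltn_trans 0%N hsrt); rewrite ?inE ?hsz //.
have inj i j : (i < d)%N -> (j < d)%N -> p i = p j -> i = j.
  move=> hi hj e; case: (ltngtP i j) => // h.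
  - by have := lt_mono _ _ hi hj h; lia.
  - by have := lt_mono _ _ hj hi h; lia.
have rev i j : (i < d)%N -> (j < d)%N -> (p i < p j)%N -> (i < j)%N.
  move=> hi hj e; case: (ltngtP i j) => // h.
  - by have := lt_mono _ _ hj hi h; lia.
  - by subst; lia.
have bnd k : (k < d)%N -> (p k < n)%N.
  by move=> hk; apply: (all_nthP 0%N hall); rewrite hsz.
pose k0 : 'I_d := Ordinal hd.
have H0 : p (w k0) = n.-1.
  have := H k0; case/orP => [/eqP //|/andP [/eqP e _]].
  have h := rev (w k0) 0%N (ltn_ord _) hd.
  have : (p (w k0) < p 0)%N by rewrite /p -[X in (_ < X)%N]/(nth 0%N P k0) -e.
  by move/h.
have Hk (k : 'I_d) : (0 < k)%N -> ((p (w k)).+1 = p k) /\ ((nth 0%N Ms k).-1 = (lm (p k)).-1).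
  move=> hk; have := H k; case/orP => [/eqP e|/andP [/eqP e1 /eqP e2]] //.
  have : w k = w k0 by apply: val_inj; apply: inj; [exact: ltn_ord|exact: ltn_ord|rewrite /p e -H0].
  by move/perm_inj => ek; move: hk; rewrite ek.
have wlt (k : 'I_d) : (0 < k)%N -> (w k < k)%N.
  move=> hk; have [e _] := Hk k hk; apply: rev => //; rewrite -e; lia.
have wk : forall m (k : 'I_d), (k : nat) = m -> (0 < k)%N -> (w k : nat) = (k : nat).-1.
  elim/ltn_ind => m IH k ek hk.
  have h1 := wlt k hk.
  case: (ltngtP (w k) (k : nat).-1) => h2; last by [].
  - have hj : ((w k).+1 < d)%N by have := ltn_ord k; lia.
    pose J : 'I_d := Ordinal hj.
    have := IH J ltac:(rewrite /= -ek; lia) J erefl ltac:(by []).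
    move=> eJ; have : w J = w k by apply: ord_inj; rewrite eJ.
    by move/perm_inj => eJk; have := congr1 (@nat_of_ord d) eJk => /=; lia.
  - lia.
have step k : (0 < k)%N -> (k < d)%N -> p k = (p k.-1).+1.
  move=> hk0 hkd; pose K : 'I_d := Ordinal hkd.
  have [e _] := Hk K hk0; by rewrite -e (wk _ K erefl hk0).
have hlast : p d.-1 = n.-1.
  have h1 : (w k0 <= d.-1)%N by have := ltn_ord (w k0); lia.
  have h2 : (p (w k0) <= p d.-1)%N.
    move: h1; rewrite leq_eqVlt => /orP [/eqP ->//|h]; apply: ltnW; apply: lt_mono => //; lia.
  have := bnd d.-1 ltac:(lia); lia.
have hdown : forall m, (m < d)%N -> (p (d.-1 - m) + m)%N = p d.-1.
  elim=> [|m IH] hm; first by rewrite subn0 addn0.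
  rewrite -IH; last lia.
  rewrite (step (d.-1 - m)%N); [|lia|lia].
  have -> : (d.-1 - m).-1 = (d.-1 - m.+1)%N by lia.
  lia.
have hnd : (d <= n)%N.
  have := hdown d.-1 ltac:(lia); rewrite hlast; have := n_gt0; lia.
split.
- move=> k hk; have := hdown (d.-1 - k)%N ltac:(lia).
  have -> : (d.-1 - (d.-1 - k))%N = k by lia.
  rewrite hlast /p; have := n_gt0; lia.
- by move=> k hk; have [_ ->] := Hk k hk.
- apply/permP => k; apply: val_inj; rewrite permE /=.
  case: (posnP k) => hk.
  + have ek : k = k0 by apply: val_inj; rewrite /= hk.
    rewrite ek /= add0n modn_small; last lia.
    apply: inj => //; last by rewrite H0 hlast.
    lia.
  + rewrite (wk _ k erefl hk).
    have -> : ((k + d).-1 = (k : nat).-1 + d)%N by lia.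
    by rewrite modnDr modn_small //; have := ltn_ord k; lia.
Qed.


Local Notation Pm mu := [seq (val i) | i <- enum 'I_n & ((mu : {ffun 'I_n -> 'I_N.+1}) i : nat) != 0%N].
Local Notation Mm mu := [seq ((mu : {ffun 'I_n -> 'I_N.+1}) i : nat) | i <- enum 'I_n & ((mu : {ffun 'I_n -> 'I_N.+1}) i : nat) != 0%N].

Lemma Pm_sorted (mu : {ffun 'I_n -> 'I_N.+1}) : sorted ltn (Pm mu).
Proof.
rewrite sorted_map; apply: sorted_filter; first by move=> y x z /=; exact: ltn_trans.
by have := iota_ltn_sorted 0 n; rewrite -val_enum_ord sorted_map.
Qed.

Lemma Pm_all (mu : {ffun 'I_n -> 'I_N.+1}) : all (fun x => x < n)%N (Pm mu).
Proof. apply/allP => x /mapP [i _ ->] /=; exact: ltn_ord. Qed.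

Lemma Pm_size (mu : {ffun 'I_n -> 'I_N.+1}) :
  size (Pm mu) = #|[pred i | (mu i : nat) != 0%N]|.
Proof. by rewrite size_map card_filter_ord. Qed.

Lemma Pm_mem (mu : {ffun 'I_n -> 'I_N.+1}) (i : 'I_n) :
  ((val i) \in Pm mu) = ((mu i : nat) != 0%N).
Proof. by rewrite (mem_map val_inj) mem_filter mem_enum andbT. Qed.

Lemma Pm_nth (mu : {ffun 'I_n -> 'I_N.+1}) (i : 'I_n) k : (k < size (Pm mu))%N ->
  nth 0%N (Pm mu) k = i -> nth 0%N (Mm mu) k = mu i.
Proof.
move=> hk e.
have hk' : (k < size [seq i <- enum 'I_n | (mu i : nat) != 0%N])%N by rewrite size_map in hk.
rewrite (set_nth_default (val i)) // (nth_map i) // in e.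
rewrite (set_nth_default (mu i : nat)) ?size_map // (nth_map i) //.
by rewrite (ord_inj e).
Qed.

Section Fixed.
Variables (b c : nat).
Hypotheses (hb : (b < n)%N) (hc : (c < lm b)%N).

Local Notation d := (n - b)%N.
Local Notation r := (c + T b.+1).+1.

Definition ms (i : nat) : nat := if (b < i)%N then lm i else if i == b then c.+1 else 0%N.

Lemma ms_le i : (ms i <= lm i)%N.
Proof. rewrite /ms; case: (ltnP b i) => _ //; case: (eqVneq i b) => [->|_] //. Qed.

Lemma ms_ltN i : (ms i < N.+1)%N.
Proof. by rewrite ltnS; apply: leq_trans (ms_le i) (lm_leN i). Qed.

Lemma ms_nz i : (i < n)%N -> (ms i != 0%N) = (b <= i)%N.
Proof.
move=> hi; rewrite /ms; case: (ltnP b i) => h.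
  by have := lm_pos hi; have := h; lia.
by case: (eqVneq i b) => [->|h']; [rewrite leqnn | apply/esym/negbTE; lia].
Qed.

Lemma sum_ms : (\sum_(i < n) ms i)%N = r.
Proof.
rewrite -(big_mkord xpredT ms) (@big_cat_nat _ _ _ b) //=; last exact: ltnW.
rewrite big1_seq /=; last first.
  move=> j; rewrite mem_index_iota /ms => hj; case: (ltnP b j) => h; first lia.
  case: (eqVneq j b) => // h'; lia.
rewrite big_ltn // {1}/ms ltnn eqxx add0n /T.
rewrite addSn; congr S; congr addn.
by apply: eq_big_seq => j; rewrite mem_index_iota => hj; rewrite /ms; case: (ltnP b j) => //; lia.
Qed.

Definition mustar : {ffun 'I_n -> 'I_N.+1} := [ffun i : 'I_n => Ordinal (ms_ltN (nat_of_ord i))].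

Lemma Pm_star : Pm mustar = iota b d.
Proof.
have -> : Pm mustar = [seq j <- iota 0 n | ms j != 0%N].
  by rewrite -val_enum_ord filter_map; congr map; apply: eq_filter => i; rewrite ffunE.
rewrite -[in iota 0 n](subnKC (ltnW hb)) iotaD filter_cat add0n.
rewrite (eq_in_filter (a2 := pred0)); last first.
  move=> j; rewrite mem_iota => hj; rewrite ms_nz /=; lia.
rewrite filter_pred0 (eq_in_filter (a2 := predT)) ?filter_predT //.
move=> j; rewrite mem_iota => hj; rewrite ms_nz /=; lia.
Qed.

Lemma Mm_star : Mm mustar = map ms (iota b d).
Proof.
rewrite -Pm_star -map_comp; apply: eq_map => i /=; by rewrite ffunE.
Qed.

Lemma mustar_ok : mu_ok r d mustar.
Proof.
apply/and3P; split.
- by apply/forallP => i; rewrite ffunE ms_le.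
- apply/eqP; rewrite -sum_ms; apply: eq_bigr => i _; by rewrite ffunE.
- by rewrite -Pm_size Pm_star size_iota.
Qed.


Lemma rho_term (x : nat) (Q : Sge F lam) : rho ((-1) ^+ x * Q) = (-1) ^+ x * rho Q.
Proof. by rewrite rhoM rho_sign. Qed.

Lemma xr_eq r' : xr F lam r' = \sum_(mu | mu_ok r' (dd lam r') mu)
   \sum_(w : 'S_(dd lam r')) (-1) ^+ odd_perm w * \prod_(k < dd lam r')
      evar F lam (nth 0%N (Pm mu) (w k)) (nth 0%N (Pm mu) k) (nth 0%N (Mm mu) k).-1.
Proof. by []. Qed.

Lemma term_struct (mu : {ffun 'I_n -> 'I_N.+1}) (w : 'S_d) : mu_ok r d mu ->
  rho (\prod_(k < d) evar F lam (nth 0%N (Pm mu) (w k)) (nth 0%N (Pm mu) k)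
         (nth 0%N (Mm mu) k).-1) != 0 ->
  mu = mustar /\ w = perm (@ord_pred_inj d).
Proof.
move=> /and3P [hle /eqP hsum /eqP hcard] hnz.
have hd0 : (0 < d)%N by lia.
have hsz : size (Pm mu) = d by rewrite Pm_size.
have Hf (k : 'I_d) : G (nth 0%N (Pm mu) (w k)) (nth 0%N (Pm mu) k) (nth 0%N (Mm mu) k).-1 != 0.
  apply: contraNneq hnz => hk; by rewrite rho_prod (bigD1 k) //= hk mul0r.
have [hP hM hw] := struct_lem (Ms := Mm mu) hd0 hsz (Pm_sorted mu) (Pm_all mu) (fun k => G_nz (Hf k)).
split => //.
have hPe : Pm mu = iota b d.
  apply: (@eq_from_nth _ 0%N); first by rewrite hsz size_iota.
  move=> k hk; rewrite hsz in hk; rewrite hP // nth_iota //; lia.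
have hsupp (i : 'I_n) : ((mu i : nat) != 0%N) = (b <= i)%N.
  rewrite -Pm_mem hPe mem_iota /=; have := ltn_ord i; lia.
have hne (i : 'I_n) : (i : nat) != b -> (mu i : nat) = ms i.
  move=> hib; case: (ltnP b i) => hbi.
  - have hk : (i - b < d)%N by have := ltn_ord i; lia.
    have e : nth 0%N (Pm mu) (i - b) = i by rewrite hP //; lia.
    have hk' : (i - b < size (Pm mu))%N by rewrite hsz.
    have hM' := Pm_nth hk' e.
    have := hM (Ordinal hk) ltac:(rewrite /=; lia); rewrite /= hM' e => e2.
    have hmu : (mu i : nat) != 0%N by rewrite hsupp ltnW.
    have := lm_pos (ltn_ord i).
    rewrite /ms hbi; lia.
  - have := hsupp i; rewrite /ms ltnNge hbi /= ifN //.
    have -> : (b <= i)%N = false by apply/negbTE; lia.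
    by move/negbT/negPn/eqP.
have hb_eq : (mu (Ordinal hb) : nat) = ms b.
  have e1 := hsum; have e2 := sum_ms.
  rewrite (bigD1 (Ordinal hb)) //= in e1; rewrite (bigD1 (Ordinal hb)) //= in e2.
  have : (\sum_(i < n | i != Ordinal hb) (mu i : nat) = \sum_(i < n | i != Ordinal hb) ms i)%N.
    apply: eq_bigr => i hi; apply: hne; apply: contra hi => /eqP e; apply/eqP; exact: val_inj.
  move=> e3; rewrite e3 -e2 in e1; exact: addIn e1.
apply/ffunP => i; apply: val_inj; rewrite ffunE /=.
case: (eqVneq (i : nat) b) => hib; last exact: hne.
have -> : i = Ordinal hb by apply: val_inj.
by rewrite hb_eq.
Qed.

Lemma rho_xr_fixed : exists s : sidx lam,
  [/\ ((sval (sval s)).1.2 : nat) = b, ((sval (sval s)).2 : nat) = c &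
      exists e : nat, rho (xr F lam r) = (-1) ^+ e * 'X_(enum_rank s)].
Proof.
have [s [hs1 hs2 hG]] := G_last hb hc.
exists s; split => //; exists (odd_perm (perm (@ord_pred_inj d))).
have hd := dd_psi hb hc.
rewrite xr_eq hd.
rewrite rho_sum (bigD1 mustar) /=; last exact: mustar_ok.
rewrite [X in _ + X]big1 ?addr0; last first.
  move=> mu /andP [hok hne]; rewrite rho_sum big1 // => w _.
  rewrite (rho_term (odd_perm w)); case: (eqVneq (rho (\prod_(k < d) evar F lam (nth 0%N (Pm mu) (w k)) (nth 0%N (Pm mu) k)
         (nth 0%N (Mm mu) k).-1)) 0) => [->|hnz]; first by rewrite mulr0.
  by have [e _] := term_struct hok hnz; rewrite e eqxx in hne.
rewrite rho_sum (bigD1 (perm (@ord_pred_inj d))) //= [X in _ + X]big1 ?addr0; last first.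
  move=> w hw; rewrite (rho_term (odd_perm w)); case: (eqVneq (rho (\prod_(k < d) evar F lam (nth 0%N (Pm mustar) (w k)) (nth 0%N (Pm mustar) k)
         (nth 0%N (Mm mustar) k).-1)) 0) => [->|hnz]; first by rewrite mulr0.
  by have [_ e] := term_struct mustar_ok hnz; rewrite e eqxx in hw.
rewrite (rho_term (odd_perm (perm (@ord_pred_inj d)))); congr (_ * _).
rewrite rho_prod Pm_star Mm_star.
have hd0 : (0 < d)%N by lia.
rewrite (bigD1 (Ordinal hd0)) //= big1 ?mulr1; last first.
  move=> k hk.
  have hk0 : (0 < k)%N by case: k hk => [[|k'] hk'] //=; rewrite eqxx.
  rewrite permE /=.
  have -> : ((k + d).-1 %% d = (k : nat).-1)%N.
    have -> : ((k + d).-1 = (k : nat).-1 + d)%N by lia.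
    by rewrite modnDr modn_small //; have := ltn_ord k; lia.
  rewrite (nth_map 0%N) ?size_iota // !nth_iota //; last by have := ltn_ord k; lia.
  rewrite /ms ifT; last lia.
  apply: G_sup; [lia | have := ltn_ord k; lia].
rewrite permE /= add0n modn_small; last lia.
rewrite (nth_map 0%N) ?size_iota // !nth_iota //; last lia.
rewrite addn0 /ms ltnn eqxx /=.
by have -> : (b + d.-1 = n.-1)%N by lia.
Qed.

End Fixed.

End Main.

Theorem lemma4p2 (F : closedFieldType) (lam : seq nat) :
  [pchar F] =i pred0 ->
  (0 < size lam)%N ->
  all (fun k => 0 < k)%N lam ->
  sorted leq lam ->
  (* algebraically independent *)
  (forall p : {mpoly F[Ntot lam]}, p \mPo rho_x F lam = 0 -> p = 0) /\
  (* generate F[S] *)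
  (forall q : FS F lam, exists p : {mpoly F[Ntot lam]}, q = p \mPo rho_x F lam).
Proof.
move=> _ hn0 hpos hsort.
pose bj (j : 'I_#|{: sidx lam}|) : nat := (sval (sval (enum_val j))).1.2.
pose cj (j : 'I_#|{: sidx lam}|) : nat := (sval (sval (enum_val j))).2.
have hbj j : (bj j < nparts lam)%N by exact: ltn_ord.
have hcj j : (cj j < Defs.lm lam (bj j))%N by have := proj2_sig (sval (enum_val j)); case/andP.
have H (i : 'I_(Ntot lam)) : exists j : 'I_#|{: sidx lam}|,
    ((i : nat) = cj j + T lam (bj j).+1)%N /\
    exists e : nat, tnth (rho_x F lam) i = (-1) ^+ e * 'X_j.
  have [b [c [hb hc ei]]] := psi_surj hn0 hpos hsort (ltn_ord i).
  have [s [hs1 hs2 [e he]]] := @rho_xr_fixed F lam hn0 hpos hsort b c hb hc.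
  exists (enum_rank s); split.
    by rewrite /bj /cj enum_rankK hs1 hs2.
  by exists e; rewrite tnth_mktuple -he ei.
have [phi Hphi] := fin_all_exists H.
have [e He] := @fin_all_exists _ (fun=> nat)
  (fun i k => tnth (rho_x F lam) i = (-1) ^+ k * 'X_(phi i)) (fun i => proj2 (Hphi i)).
pose g (j : 'I_#|{: sidx lam}|) : 'I_(Ntot lam) :=
  Ordinal (psi_ltN hn0 hpos hsort (hbj j) (hcj j)).
apply: (triv_auto (phi := phi) (g := g) (e := e)) => //.
- move=> i; apply: ord_inj => /=; by have [-> _] := Hphi i.
- move=> j; have [hj _] := Hphi (g j); move: hj => /= hj.
  have [eb ec] := psi_inj hn0 hpos hsort (hbj j) (hcj j) (hbj _) (hcj _) hj.
  apply: enum_val_inj; apply: val_inj; apply: gidx_eq.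
  + by rewrite (eqP (proj2_sig (enum_val (phi (g j))))) (eqP (proj2_sig (enum_val j))).
  + by rewrite -/(bj _) -/(bj _) eb.
  + by rewrite -/(cj _) -/(cj _) ec.
Qed.
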